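(* Let $n\ge1$, $m\ge0$, $\Phi(\mathbf t;\mathbf y)=\sum_{k=0}^m t_k p_{k+1}(\mathbf y)$, and let $\mathbf u(\mathbf t)=(u_1,\dots,u_n)$ be a $C^1$ map on an open set of parameters $\mathbf t=(t_0,\dots,t_m)$ such that $\frac{\partial\Phi}{\partial y_i}(\mathbf t;\mathbf u(\mathbf t))=0$ for $i=1,\dots,n$. Assume $\Phi_{i,j}:=\frac{\partial^2\Phi}{\partial y_i\partial y_j}(\mathbf t;\mathbf u(\mathbf t))\neq0$ for all $i,j\in\{1,\dots,n\}$ with $i+j>n$. Then for every $k=1,\dots,m$, \[ \frac{\partial \mathbf u}{\partial t_k}={\sf A}_k(\mathbf u)\,\frac{\partial \mathbf u}{\partial t_0}, \] where ${\sf A}_k(\mathbf u)$ is the upper triangular Toeplitz $n\times n$ matrix with entries $({\sf A}_k)_{i,j}=p_{k-j+i}(\mathbf u)$ for $i\le j$ and $({\sf A}_k)_{i,j}=0$ for $i>j$. In particular ${\sf A}_1$ is the Jordan block with $u_1$ on the diagonal and $1$ on the first superdiagonal.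
   Context: The elementary Schur polynomials $p_k(\mathbf y)$, $\mathbf y=(y_1,\dots,y_n)$, are defined by $\exp\big(\sum_{i=1}^n y_i z^i\big)=\sum_{k\ge 0}p_k(\mathbf y)z^k$, with the convention $p_k=0$ for $k<0$ (so $p_0=1$, $p_1=y_1$). *)

(* Defs.v *)
From Stdlib Require Import Reals.
From mathcomp Require Import all_boot.
Set Implicit Arguments. Unset Strict Implicit. Unset Printing Implicit Defensive.

Local Open Scope R_scope.

(* Coordinates are 0-based: y : 'I_n -> R, the paper's y_{i} is y (i-1). *)

(* Elementary Schur polynomial p_k(y), k >= 0: the coefficient of z^k in
   exp(sum_{i=1}^n y_i z^i) = prod_i sum_a (y_i z^i)^a / a!, i.e.
   p_k(y) = sum over multi-indices (a_1..a_n) with sum_i i a_i = k of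
            prod_i y_i^{a_i} / a_i!.
   (Each a_i <= k, so bounding a_i by 'I_(k+1) loses nothing.) *)
Definition schur_p (n k : nat) (y : 'I_n -> R) : R :=
  \big[Rplus/0]_(a : {ffun 'I_n -> 'I_k.+1} |
                   (\sum_(i < n) i.+1 * a i)%N == k)
     \big[Rmult/1]_(i < n) (y i ^ (a i) / INR (Stdlib.Arith.Factorial.fact (a i))).

Definition Phi (m n : nat) (t : 'I_m.+1 -> R) (y : 'I_n -> R) : R :=
  \big[Rplus/0]_(k < m.+1) (t k * schur_p k.+1 y).

Definition upd (d : nat) (x : 'I_d -> R) (i : 'I_d) (s : R) : 'I_d -> R :=
  fun j => if j == i then s else x j.

Definition is_partial (d : nat) (f : ('I_d -> R) -> R) (i : 'I_d)
  (x : 'I_d -> R) (l : R) : Prop :=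
  derivable_pt_lim (fun s => f (upd x i s)) (x i) l.

Definition is_open (d : nat) (U : ('I_d -> R) -> Prop) : Prop :=
  forall t, U t -> exists eps, 0 < eps /\
    forall s, (forall k, Rabs (s k - t k) < eps) -> U s.

Definition cont_on (d : nat) (U : ('I_d -> R) -> Prop) (f : ('I_d -> R) -> R)
  : Prop :=
  forall t, U t -> forall eps, 0 < eps -> exists delta, 0 < delta /\
    forall s, U s -> (forall k, Rabs (s k - t k) < delta) ->
      Rabs (f s - f t) < eps.

Definition Amat (n k : nat) (y : 'I_n -> R) (i j : 'I_n) : R :=
  if ((i <= j) && (j - i <= k))%N then schur_p (k - (j - i)) y else 0.

(* Main.v *)
Require Import Defs.
From Stdlib Require Import Reals Lra FunctionalExtensionality.
From mathcomp Require Import all_boot.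
From HB Require Import structures.
From mathcomp Require Import zify.
Set Implicit Arguments. Unset Strict Implicit. Unset Printing Implicit Defensive.
Local Open Scope R_scope.

Lemma RplusA : associative Rplus. Proof. by move=> *; rewrite Rplus_assoc. Qed.
Lemma RmultA : associative Rmult. Proof. by move=> *; rewrite Rmult_assoc. Qed.
HB.instance Definition _ := Monoid.isComLaw.Build R 0 Rplus RplusA Rplus_comm Rplus_0_l.
HB.instance Definition _ := Monoid.isComLaw.Build R 1 Rmult RmultA Rmult_comm Rmult_1_l.
HB.instance Definition _ := Monoid.isMulLaw.Build R 0 Rmult Rmult_0_l Rmult_0_r.
HB.instance Definition _ := Monoid.isAddLaw.Build R Rmult Rplus Rmult_plus_distr_r Rmult_plus_distr_l.

Lemma D_ext (f g : R -> R) x l : (forall s, f s = g s) ->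
  derivable_pt_lim f x l -> derivable_pt_lim g x l.
Proof. by move=> H; rewrite (functional_extensionality f g H). Qed.

Lemma D_sum (I : Type) (r : seq I) (P : pred I) (f : I -> R -> R) (f' : I -> R) x :
  (forall i, P i -> derivable_pt_lim (f i) x (f' i)) ->
  derivable_pt_lim (fun s => \big[Rplus/0]_(i <- r | P i) f i s) x
                   (\big[Rplus/0]_(i <- r | P i) f' i).
Proof.
move=> H; elim: r => [|j r IH].
  rewrite big_nil; apply: (D_ext (f:=fun _ => 0)) => [s|]; first by rewrite big_nil.
  exact: derivable_pt_lim_const.
rewrite big_cons; apply: (D_ext (f:=fun s => if P j then f j s + \big[Rplus/0]_(i <- r | P i) f i s else \big[Rplus/0]_(i <- r | P i) f i s)) => [s|]; first by rewrite big_cons.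
case: (boolP (P j)) => Pj.
  exact: (derivable_pt_lim_plus _ _ _ _ _ (H j Pj) IH).
exact: IH.
Qed.


Lemma D_prod (I : eqType) (r : seq I) (f : I -> R -> R) (f' : I -> R) x :
  uniq r -> (forall i, derivable_pt_lim (f i) x (f' i)) ->
  derivable_pt_lim (fun s => \big[Rmult/1]_(i <- r) f i s) x
    (\big[Rplus/0]_(i <- r) (f' i * \big[Rmult/1]_(j <- r | j != i) f j x)).
Proof.
move=> + H; elim: r => [|j r IH] /=.
  move=> _; rewrite big_nil; apply: (D_ext (f:=fun _ => 1)) => [s|]; first by rewrite big_nil.
  exact: derivable_pt_lim_const.
case/andP=> jr ur.
apply: (D_ext (f:=fun s => f j s * \big[Rmult/1]_(i <- r) f i s)) => [s|]; first by rewrite big_cons.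
have := derivable_pt_lim_mult _ _ _ _ _ (H j) (IH ur).
congr derivable_pt_lim.
rewrite big_cons big_cons eqxx /=.
have -> : \big[Rmult/1]_(l <- r | l != j) f l x = \big[Rmult/1]_(l <- r) f l x.
  rewrite big_seq_cond [RHS]big_seq_cond; apply: eq_bigl => l.
  by case: (boolP (l \in r)) => // lr; rewrite andbT; apply/negP=> /eqP E; move: jr; rewrite -E lr.
congr Rplus.
rewrite big_distrr /= big_seq [RHS]big_seq; apply: eq_bigr => i ir.
rewrite big_cons.
have -> : (j != i) by apply/negP=> /eqP E; move: jr; rewrite E ir.
by rewrite -!Rmult_assoc (Rmult_comm (f j x)).
Qed.

Lemma D_powc (g : R -> R) g' x m c : derivable_pt_lim g x g' ->
  derivable_pt_lim (fun s => g s ^ m / c) x (INR m * g x ^ Init.Nat.pred m * g' / c).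
Proof.
move=> Hg.
have H := derivable_pt_lim_scal _ (/c) _ _
   (derivable_pt_lim_comp _ _ _ _ _ Hg (derivable_pt_lim_pow (g x) m)).
have -> : INR m * g x ^ Init.Nat.pred m * g' / c = /c * (INR m * g x ^ Init.Nat.pred m * g')
  by rewrite /Rdiv; ring.
apply: (D_ext _ H) => s; rewrite /mult_real_fct /Ranalysis1.comp /Rdiv; ring.
Qed.

Section Comb.
Variable n : nat.

Definition wt N (a : {ffun 'I_n -> 'I_N}) : nat := (\sum_(i < n) i.+1 * a i)%N.
Definition term N (a : {ffun 'I_n -> 'I_N}) (y : 'I_n -> R) : R :=
  \big[Rmult/1]_(i < n) (y i ^ (a i) / INR (Stdlib.Arith.Factorial.fact (a i))).
Definition SN N k y := \big[Rplus/0]_(a : {ffun 'I_n -> 'I_N} | wt a == k) term a y.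

Lemma SN_def k y : schur_p k y = SN k.+1 k y.
Proof. by []. Qed.

Lemma wt_le N (a : {ffun 'I_n -> 'I_N}) (i : 'I_n) : (a i <= wt a)%N.
Proof.
rewrite /wt (bigD1 i) //=; apply: leq_trans (leq_addr _ _).
by rewrite mulSn leq_addr.
Qed.

Lemma wt_le2 N (a : {ffun 'I_n -> 'I_N}) (i : 'I_n) : (i.+1 * a i <= wt a)%N.
Proof. by rewrite /wt (bigD1 i) //= leq_addr. Qed.

Lemma SN_bound N k y : (k < N)%N -> SN N k y = schur_p k y.
Proof.
move=> hk; rewrite SN_def /SN.
pose h (a : {ffun 'I_n -> 'I_k.+1}) : {ffun 'I_n -> 'I_N} := [ffun i => widen_ord hk (a i)].
pose h' (b : {ffun 'I_n -> 'I_N}) : {ffun 'I_n -> 'I_k.+1} := [ffun i => inord (b i)].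
rewrite (reindex_onto h h') => [|b /eqP wb]; last first.
  apply/ffunP => i; rewrite ffunE; apply/val_inj => /=.
  rewrite ffunE inordK // ltnS -wb; exact: wt_le.
have hw : forall a, wt (h a) = wt a.
  by move=> a; apply: eq_bigr => i _; rewrite ffunE.
apply: eq_big => [a|a _].
  rewrite hw; have -> : h' (h a) = a; last by rewrite eqxx andbT.
  by apply/ffunP => i; rewrite !ffunE; apply/val_inj; rewrite /= inordK ?ffunE.
by apply: eq_bigr => i _; rewrite ffunE.
Qed.


Lemma wt_shift N (a b : {ffun 'I_n -> 'I_N}) (i : 'I_n) :
  (forall j, a j = (b j + (j == i))%N :> nat) -> wt a = (wt b + i.+1)%N.
Proof.
move=> H; rewrite /wt; under eq_bigr do rewrite H mulnDr.
rewrite big_split /=; congr addn.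
rewrite (bigD1 i) //= eqxx muln1 big1 ?addn0 // => j /negbTE ->; by rewrite muln0.
Qed.

Definition dec k (i : 'I_n) (a : {ffun 'I_n -> 'I_k.+1}) : {ffun 'I_n -> 'I_k.+1} :=
  [ffun j => inord (a j - (j == i))].
Definition inc k (i : 'I_n) (a : {ffun 'I_n -> 'I_k.+1}) : {ffun 'I_n -> 'I_k.+1} :=
  [ffun j => inord (a j + (j == i))].

Lemma ord_sub_lt N (x : 'I_N.+1) d : (x - d < N.+1)%N.
Proof. by rewrite ltnS; apply: leq_trans (leq_subr _ _) _; rewrite -ltnS. Qed.

Lemma SN_shift k (i : 'I_n) y : (i.+1 <= k)%N ->
  \big[Rplus/0]_(a : {ffun 'I_n -> 'I_k.+1} | wt a == k)
     (if (0 < a i)%N then term (dec i a) y else 0) = SN k.+1 (k - i.+1)%N y.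
Proof.
move=> hik; rewrite -big_mkcondr /SN.
rewrite [RHS](reindex_onto (dec i) (inc i)) => [|b /eqP wb]; last first.
  apply/ffunP => j; rewrite ffunE; apply/val_inj => /=.
  have bj := wt_le b j.
  rewrite ffunE inordK; first by rewrite inordK ?addnK //; case: (j == i) => /=; lia.
  by rewrite inordK; case: (j == i) => /=; lia.
apply: eq_bigl => a.
have ai := ltn_ord (a i).
case: (posnP (a i)) => [a0|apos].
  rewrite andbF; apply/esym/negbTE/negP => /andP [_ /eqP E].
  have := congr1 (fun f : {ffun _ -> _} => nat_of_ord (f i)) E; rewrite /= ffunE /= ffunE eqxx a0 /=.
  by rewrite inordK ?inordK //=; lia.
have Hid : inc i (dec i a) = a.
  apply/ffunP => j; rewrite ffunE; apply/val_inj => /=; rewrite ffunE.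
  have aj := ltn_ord (a j).
  case: (eqVneq j i) => [E|H].
    rewrite (@inordK _ (a j - true)); last exact: ord_sub_lt.
    rewrite /= subnK; last by rewrite E.
    by rewrite inord_val.
  rewrite (@inordK _ (a j - false)); last exact: ord_sub_lt.
  by rewrite /= subn0 addn0 inord_val.


rewrite Hid eqxx andbT.
have Hw : wt a = (wt (dec i a) + i.+1)%N.
  apply: wt_shift => j; rewrite ffunE inordK; last exact: ord_sub_lt.
  by case: (eqVneq j i) => [E|H] /=; [rewrite subnK // E | rewrite subn0 addn0].
rewrite Hw andbT; apply/idP/idP => /eqP HH; apply/eqP; lia.
Qed.


Lemma D_term k (a : {ffun 'I_n -> 'I_k.+1}) (v : R -> 'I_n -> R) (v' : 'I_n -> R) x :
  (forall i, derivable_pt_lim (fun s => v s i) x (v' i)) ->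
  derivable_pt_lim (fun s => term a (v s)) x
    (\big[Rplus/0]_(i < n) (v' i * (if (0 < a i)%N then term (dec i a) (v x) else 0))).
Proof.
move=> Hv.
have := @D_prod _ (index_enum 'I_n) (fun i s => v s i ^ a i / INR (Stdlib.Arith.Factorial.fact (a i)))
  (fun i => INR (a i) * v x i ^ Init.Nat.pred (a i) * v' i / INR (Stdlib.Arith.Factorial.fact (a i))) x
  (index_enum_uniq _) (fun i => D_powc _ _ (Hv i)).
congr derivable_pt_lim.
apply: eq_bigr => i _.
case: (posnP (a i)) => [a0|apos].
  rewrite a0 /=; rewrite /Rdiv; ring.
rewrite /term [in RHS](bigD1 i) //=.
have -> : \big[Rmult/1]_(j < n | j != i)
   (v x j ^ dec i a j / INR (Stdlib.Arith.Factorial.fact (dec i a j))) =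
   \big[Rmult/1]_(j < n | j != i)
   (v x j ^ a j / INR (Stdlib.Arith.Factorial.fact (a j))).
  apply: eq_bigr => j /negbTE ji; rewrite ffunE ji /= subn0.
  by rewrite inord_val.
rewrite ffunE eqxx /= inordK; last exact: ord_sub_lt.
move: apos; case: (nat_of_ord (a i)) => [//|m] _.
rewrite subn1 fact_simpl mult_INR; change (m.+1.-1) with m.
have := INR_fact_neq_0 m; have : INR m.+1 <> 0 by apply: not_0_INR.
move=> h1 h2. set P := \big[Rmult/1]_(_ < n | _) _. set w := v x i ^ m. field; split => //.
Qed.

End Comb.

Lemma D_ext2 (f g : R -> R) x l l' : (forall s, f s = g s) -> l = l' ->
  derivable_pt_lim f x l -> derivable_pt_lim g x l'.
Proof. by move=> H <-; apply: D_ext. Qed.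

Definition PP n (k d : nat) (y : 'I_n -> R) : R :=
  if (d <= k)%N then schur_p (k - d) y else 0.

Lemma D_schur n k (v : R -> 'I_n -> R) (v' : 'I_n -> R) x :
  (forall i, derivable_pt_lim (fun s => v s i) x (v' i)) ->
  derivable_pt_lim (fun s => schur_p k (v s)) x
    (\big[Rplus/0]_(i < n) (v' i * PP k i.+1 (v x))).
Proof.
move=> Hv.
have H := @D_sum _ (index_enum {ffun 'I_n -> 'I_k.+1}) (fun a => wt a == k)
  (fun a s => term a (v s)) _ x (fun a _ => D_term a Hv).
apply: (D_ext2 _ _ H) => [s //|].
rewrite exchange_big; apply: eq_bigr => i _; rewrite -big_distrr /=; congr (_ * _).
rewrite /PP; case: (leqP i.+1 k) => h.
  by rewrite SN_shift // SN_bound // ltnS leq_subr.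
apply: big1 => a /eqP wa.
case: posnP => [//|ap]; exfalso.
have := leq_trans (leq_pmulr i.+1 ap) (wt_le2 a i).
by rewrite wa leqNgt h.
Qed.

Lemma D_PP n k d (v : R -> 'I_n -> R) (v' : 'I_n -> R) x :
  (forall i, derivable_pt_lim (fun s => v s i) x (v' i)) ->
  derivable_pt_lim (fun s => PP k d (v s)) x
    (\big[Rplus/0]_(i < n) (v' i * PP k (d + i.+1) (v x))).
Proof.
move=> Hv; rewrite /PP; case: (leqP d k) => h.
  apply: (D_ext2 _ _ (D_schur (k - d) Hv)) => [s //|].
  apply: eq_bigr => i _; rewrite /PP leq_subRL // subnDA; by [].
apply: (D_ext2 (f := fun _ => 0)) => [s //| |]; last exact: derivable_pt_lim_const.
rewrite big1 // => i _.
have -> : (d + i.+1 <= k)%N = false by apply/negbTE; rewrite -ltnNge; apply: leq_trans h (leq_addr _ _).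
by rewrite Rmult_0_r.
Qed.

Definition hh m n (T : 'I_m.+1 -> R) (y : 'I_n -> R) (d : nat) : R :=
  \big[Rplus/0]_(r < m.+1) (T r * PP r.+1 d y).

Lemma D_hh m n d (T : R -> 'I_m.+1 -> R) (T' : 'I_m.+1 -> R)
  (v : R -> 'I_n -> R) (v' : 'I_n -> R) x :
  (forall r, derivable_pt_lim (fun s => T s r) x (T' r)) ->
  (forall i, derivable_pt_lim (fun s => v s i) x (v' i)) ->
  derivable_pt_lim (fun s => hh (T s) (v s) d) x
    (\big[Rplus/0]_(r < m.+1) (T' r * PP r.+1 d (v x)) +
     \big[Rplus/0]_(i < n) (v' i * hh (T x) (v x) (d + i.+1))).
Proof.
move=> HT Hv.
have H := @D_sum _ (index_enum 'I_m.+1) xpredT (fun r s => T s r * PP r.+1 d (v s)) _ x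
  (fun r _ => derivable_pt_lim_mult _ _ _ _ _ (HT r) (D_PP r.+1 d Hv)).
apply: (D_ext2 _ _ H) => [s //|].
rewrite big_split /=; congr Rplus.
rewrite /hh.
under [RHS]eq_bigr do rewrite big_distrr /=.
rewrite [RHS]exchange_big /=; apply: eq_bigr => r _.
rewrite big_distrr /=; apply: eq_bigr => i _; ring.
Qed.

Lemma Knat n (c a : nat -> R) (i l : 'I_n) :
  \big[Rplus/0]_(j < n) ((if (j <= l)%N then a (l - j)%N else 0) * c (i.+1 + j.+1)%N) =
  \big[Rplus/0]_(0 <= j < l.+1) (a j * c (i + l + 2 - j)%N).
Proof.
rewrite -(big_mkord xpredT (fun j => (if (j <= l)%N then a (l - j)%N else 0) * c (i.+1 + j.+1)%N)).
have hl := ltn_ord l.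
rewrite (big_cat_nat (n:=l.+1)) //=.
rewrite [X in _ + X]big1_seq => [|j]; last first.
  move=> /andP [_]; rewrite mem_index_iota => /andP [h1 _]; rewrite leqNgt h1 /=; ring.
rewrite Rplus_0_r big_nat_rev /= add0n.
apply: eq_big_nat => j /andP [_ hj].
have -> : (l.+1 - j.+1 <= l)%N by rewrite subSS leq_subr.
congr (a _ * c _); lia.
Qed.

Lemma Ksym n (c a : nat -> R) (hc0 : forall d, (0 < d <= n)%N -> c d = 0) (i l : 'I_n) :
  \big[Rplus/0]_(j < n) ((if (j <= l)%N then a (l - j)%N else 0) * c (i.+1 + j.+1)%N) =
  \big[Rplus/0]_(j < n) ((if (j <= i)%N then a (i - j)%N else 0) * c (l.+1 + j.+1)%N).
Proof.
wlog il : i l / (i <= l)%N.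
  move=> W; case: (leqP i l) => h; first exact: W.
  by symmetry; apply: W; exact: ltnW.
rewrite !Knat.
have E : forall j, (l + i + 2 - j = i + l + 2 - j)%N by move=> j; lia.
under [RHS]eq_bigr do rewrite E.
have hl := ltn_ord l.
rewrite (big_cat_nat (n:=i.+1)) //=.
rewrite [X in _ + X]big1_seq ?Rplus_0_r // => j.
move=> /andP [_]; rewrite mem_index_iota => /andP [h1 h2].
rewrite hc0; first ring.
apply/andP; split; lia.
Qed.

Lemma uniq_hankel n (c : nat -> R) (hc0 : forall d, (0 < d <= n)%N -> c d = 0)
  (hcn : c n.+1 <> 0) (w : 'I_n -> R) :
  (forall i : 'I_n, \big[Rplus/0]_(j < n) (w j * c (i.+1 + j.+1)%N) = 0) ->
  forall j, w j = 0.
Proof.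
move=> hw.
suff S : forall p (j : 'I_n), (n - p <= j)%N -> w j = 0.
  by move=> j; apply: (S n); rewrite subnn.
elim=> [|p IH] j hj.
  by move: hj; rewrite subn0 leqNgt ltn_ord.
case: (leqP (n - p) j) => hj2; first exact: IH.
have hjn := ltn_ord j.
have hp : (p < n)%N by lia.
have := hw (Ordinal hp).
rewrite (bigD1 j) //= big1 => [|l hl]; last first.
  have hl' : (nat_of_ord l) <> j by move=> E; move/eqP: hl; apply; apply: val_inj.
  case: (leqP (n - p) l) => hl2; first by rewrite IH //; ring.
  rewrite hc0; first ring.
  have hl3 := ltn_ord l; apply/andP; split; lia.
rewrite Rplus_0_r => /Rmult_integral [//|H]; exfalso; apply: hcn.
have E : (p.+1 + j.+1 = n.+1)%N by lia.
by rewrite -E.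
Qed.

Lemma sum_minus n (F G : 'I_n -> R) :
  \big[Rplus/0]_(i < n) (F i - G i) = \big[Rplus/0]_(i < n) F i - \big[Rplus/0]_(i < n) G i.
Proof.
suff : \big[Rplus/0]_(i < n) (F i - G i) + \big[Rplus/0]_(i < n) G i = \big[Rplus/0]_(i < n) F i by lra.
rewrite -big_split /=; apply: eq_bigr => i _; ring.
Qed.

Lemma hankel_solve n (c a : nat -> R) (hc0 : forall d, (0 < d <= n)%N -> c d = 0)
  (hcn : c n.+1 <> 0) (x y : 'I_n -> R)
  (hx : forall i : 'I_n, (if (i == 0 :> nat)%N then 1 else 0) +
          \big[Rplus/0]_(j < n) (x j * c (i.+1 + j.+1)%N) = 0)
  (hy : forall i : 'I_n, a i + \big[Rplus/0]_(j < n) (y j * c (i.+1 + j.+1)%N) = 0) :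
  forall i : 'I_n, y i = \big[Rplus/0]_(j < n) ((if (i <= j)%N then a (j - i)%N else 0) * x j).
Proof.
set z := fun i : 'I_n => \big[Rplus/0]_(j < n) ((if (i <= j)%N then a (j - i)%N else 0) * x j).
have hz : forall i : 'I_n, a i + \big[Rplus/0]_(j < n) (z j * c (i.+1 + j.+1)%N) = 0.
  move=> i.
  have -> : \big[Rplus/0]_(j < n) (z j * c (i.+1 + j.+1)%N) =
      \big[Rplus/0]_(l < n) (x l *
         \big[Rplus/0]_(j < n) ((if (j <= l)%N then a (l - j)%N else 0) * c (i.+1 + j.+1)%N)).
    rewrite /z; under eq_bigr do rewrite big_distrl /=.
    rewrite exchange_big /=; apply: eq_bigr => l _; rewrite big_distrr /=.
    apply: eq_bigr => j _; ring.
  under eq_bigr do rewrite Ksym //.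
  have -> : \big[Rplus/0]_(l < n) (x l *
      \big[Rplus/0]_(j < n) ((if (j <= i)%N then a (i - j)%N else 0) * c (l.+1 + j.+1)%N)) =
      \big[Rplus/0]_(j < n) ((if (j <= i)%N then a (i - j)%N else 0) *
          \big[Rplus/0]_(l < n) (x l * c (j.+1 + l.+1)%N)).
    under eq_bigr do rewrite big_distrr /=.
    rewrite exchange_big /=; apply: eq_bigr => j _; rewrite big_distrr /=.
    apply: eq_bigr => l _; rewrite addnC; ring.
  have h0 : (0 < n)%N by apply: leq_ltn_trans (leq0n i) (ltn_ord i).
  have Hs : forall j : 'I_n, \big[Rplus/0]_(l < n) (x l * c (j.+1 + l.+1)%N) =
      - (if (j == 0 :> nat)%N then 1 else 0) by move=> j; have := hx j; lra.
  under eq_bigr do rewrite Hs.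
  rewrite (bigD1 (Ordinal h0)) //= big1 => [|j]; last first.
    rewrite ?andTb => hj.
    have hj' : (nat_of_ord j) <> 0%N by move=> E; move/eqP: hj; apply; apply: val_inj; rewrite /= E.
    have -> : (nat_of_ord j == 0%N) = false by apply/eqP.
    ring.
  rewrite subn0; ring.
have W := uniq_hankel hc0 hcn (w := fun j => y j - z j).
move=> i; apply: Rminus_diag_uniq; apply: W => {}i.
rewrite (eq_bigr (fun j => y j * c (i.+1 + j.+1)%N - z j * c (i.+1 + j.+1)%N)) => [|j _]; last ring.
rewrite sum_minus.
have := hy i; have := hz i; lra.
Qed.

Lemma upd_id d (y : 'I_d -> R) i : upd y i (y i) = y.
Proof. by apply: functional_extensionality => j; rewrite /upd; case: eqP => // ->. Qed.

Lemma D_upd d (y : 'I_d -> R) i j x :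
  derivable_pt_lim (fun s => upd y i s j) x (if j == i then 1 else 0).
Proof.
rewrite /upd; case: (j == i).
  exact: derivable_pt_lim_id.
exact: derivable_pt_lim_const.
Qed.

Lemma Phi_hh m n (t : 'I_m.+1 -> R) (y : 'I_n -> R) : Phi t y = hh t y 0.
Proof. by apply: eq_bigr => r _; rewrite /PP leq0n subn0. Qed.

Lemma sum_delta d (F : 'I_d -> R) i :
  \big[Rplus/0]_(j < d) ((if j == i then 1 else 0) * F j) = F i.
Proof.
rewrite (bigD1 i) //= eqxx big1 => [|j /negbTE ->]; ring.
Qed.

Lemma partial_hh m n (t : 'I_m.+1 -> R) (y : 'I_n -> R) d i :
  is_partial (fun y => hh t y d) i y (hh t y (d + i.+1)).
Proof.
have H := @D_hh m n d (fun _ => t) (fun _ => 0) (fun s => upd y i s)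
  (fun j => if j == i then 1 else 0) (y i)
  (fun r => derivable_pt_lim_const _ _) (fun j => D_upd y i j (y i)).
apply: (D_ext2 _ _ H) => [s //|].
rewrite big1 => [|r _]; last ring.
by rewrite Rplus_0_l upd_id sum_delta.
Qed.

Lemma locally_zero (f : R -> R) x l : derivable_pt_lim f x l ->
  (exists eps, 0 < eps /\ forall s, Rabs (s - x) < eps -> f s = 0) -> l = 0.
Proof.
move=> Hf [eps [he Hz]].
apply: (uniqueness_limite f x) => //.
move=> e He; exists (mkposreal eps he) => h hne /= hlt.
rewrite Hz; last by rewrite /Rminus Rplus_comm -Rplus_assoc Rplus_opp_l Rplus_0_l.
rewrite Hz; last by rewrite Rminus_diag Rabs_R0.
by rewrite /Rdiv Rminus_diag Rmult_0_l Rminus_diag Rabs_R0.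
Qed.

Lemma schur_p0 n (y : 'I_n -> R) : schur_p 0 y = 1.
Proof.
rewrite /schur_p (big_pred1 [ffun=> ord0]) => [|a]; last first.
  rewrite /=; have -> : a = [ffun=> ord0].
    by apply/ffunP => i; rewrite ffunE; apply/val_inj; case: (a i) => -[].
  by rewrite eqxx; apply/eqP; rewrite big1 // => i _; rewrite ffunE muln0.
rewrite big1 // => i _; rewrite ffunE /=; field.
Qed.

Unset Implicit Arguments.

Theorem mainTheorem3
  (n m : nat) (hn : (0 < n)%N)
  (U : ('I_m.+1 -> R) -> Prop) (hU : is_open U)
  (u : ('I_m.+1 -> R) -> 'I_n -> R)
  (Du : 'I_m.+1 -> ('I_m.+1 -> R) -> 'I_n -> R)
  (hDu : forall (k : 'I_m.+1) t (i : 'I_n), U t ->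
           is_partial (fun s => u s i) k t (Du k t i))
  (hDu_cont : forall (k : 'I_m.+1) (i : 'I_n), cont_on U (fun t => Du k t i))
  (hcrit : forall t, U t -> forall i : 'I_n,
             is_partial (Phi t) i (u t) 0)
  (hhess : forall t, U t -> forall i j : 'I_n, (n < i.+1 + j.+1)%N ->
             exists (g : ('I_n -> R) -> R) (l : R),
               (forall y, is_partial (Phi t) j y (g y)) /\
               is_partial g i (u t) l /\ l <> 0) :
  forall k : 'I_m.+1, (1 <= k)%N ->
  forall t, U t -> forall i : 'I_n,
    Du k t i = \big[Rplus/0]_(j < n) (Amat k (u t) i j * Du ord0 t j).
Proof.
move=> k hk t Ut.
have PhiE : forall t' : 'I_m.+1 -> R, @Phi m n t' = (fun y : 'I_n -> R => hh t' y 0).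
  by move=> t'; apply: functional_extensionality => y; apply: Phi_hh.
have crit : forall t', U t' -> forall i : 'I_n, hh t' (u t') i.+1 = 0.
  move=> t' Ut' i'; have := hcrit t' Ut' i'; rewrite PhiE => H.
  have := partial_hh t' (u t') 0 i'; rewrite add0n => H2.
  exact: (uniqueness_limite _ _ _ _ H2 H).
have tot : forall (kk : 'I_m.+1) d,
    derivable_pt_lim (fun s => hh (upd t kk s) (u (upd t kk s)) d) (t kk)
      (PP kk.+1 d (u t) + \big[Rplus/0]_(j < n) (Du kk t j * hh t (u t) (d + j.+1))).
  move=> kk d.
  have H := @D_hh m n d (fun s => upd t kk s) (fun r => if r == kk then 1 else 0)
    (fun s => u (upd t kk s)) (Du kk t) (t kk)
    (fun r => D_upd t kk r (t kk)) (fun j => hDu kk t j Ut).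
  apply: (D_ext2 _ _ H) => [s //|].
  by rewrite upd_id sum_delta.
have eqn : forall (kk : 'I_m.+1) (i : 'I_n),
    PP kk.+1 i.+1 (u t) + \big[Rplus/0]_(j < n) (Du kk t j * hh t (u t) (i.+1 + j.+1)) = 0.
  move=> kk i; apply: (locally_zero (tot kk i.+1)).
  have [eps [he Heps]] := hU t Ut.
  exists eps; split => // s hs; apply: crit; apply: Heps => k'.
  rewrite /upd; case: eqP => [-> //|_].
  by rewrite Rminus_diag Rabs_R0.
have hc0 : forall d, (0 < d <= n)%N -> hh t (u t) d = 0.
  move=> d /andP [d0 dn].
  have hd : (d.-1 < n)%N by rewrite prednK.
  by have := crit t Ut (Ordinal hd); rewrite /= prednK.
have hcn : hh t (u t) n.+1 <> 0.
  have jn : (n.-1 < n)%N by rewrite prednK.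
  have := hhess t Ut (Ordinal hn) (Ordinal jn); rewrite /= prednK // => /(_ (leqnn _)).
  case=> g [l [Hg [Hl l0]]].
  have gE : g = (fun y => hh t y n).
    apply: functional_extensionality => y.
    have := Hg y; rewrite PhiE => H.
    have := partial_hh t y 0 (Ordinal jn); rewrite /= add0n prednK // => H2.
    exact: (uniqueness_limite _ _ _ _ H H2).
  rewrite gE in Hl.
  have := partial_hh t (u t) n (Ordinal hn); rewrite /= addn1 => H2.
  by rewrite (uniqueness_limite _ _ _ _ H2 Hl).
move=> i.
have hx : forall i' : 'I_n, (if (i' == 0 :> nat)%N then 1 else 0) +
    \big[Rplus/0]_(j < n) (Du ord0 t j * hh t (u t) (i'.+1 + j.+1)%N) = 0.
  move=> i'; have := eqn ord0 i'; rewrite /PP /=.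
  by case: (nat_of_ord i') => [|p] /=; first by rewrite schur_p0.
have hy : forall i' : 'I_n, PP k i' (u t) +
    \big[Rplus/0]_(j < n) (Du k t j * hh t (u t) (i'.+1 + j.+1)%N) = 0.
  by move=> i'; have := eqn k i'; rewrite /PP ltnS subSS.
rewrite (@hankel_solve n (hh t (u t)) (fun d => PP k d (u t)) hc0 hcn (Du ord0 t) (Du k t) hx hy i).
apply: eq_bigr => j _; rewrite /Amat /PP.
by case: (i <= j)%N.
Qed.
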